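(* Let $\{\xi_k\}$ be the sequence produced by Algorithm DFNDFL (described in the context). Then \[ \lim_{k\to\infty} \xi_k = 0. \]
   Context: Consider the problem $\min f(x)$ s.t. $x\in X\cap\mathcal{Z}$, where $X=\{x\in\mathbb{R}^n: l\le x\le u\}$ is compact (with $l_i<u_i$, and $l_i,u_i\in\mathbb{Z}$ for $i\in I^z$), $\mathcal{Z}=\{x\in\mathbb{R}^n: x_i\in\mathbb{Z},\ i\in I^z\}$, $I^c\cup I^z=\{1,\dots,n\}$, $I^c\cap I^z=\emptyset$, and $f$ is continuous (Lipschitz continuous with respect to $x_i$, $i\in I^c$). Discrete Search$(\tilde\alpha,w,p,\xi;\alpha)$: compute the largest $\bar\alpha$ with $w+\bar\alpha p\in X\cap\mathcal{Z}$, set $\alpha=\min\{\bar\alpha,\tilde\alpha\}$; if $\alpha>0$ and $f(w+\alpha p)\le f(w)-\xi$, repeatedly set $\beta=\min\{\bar\alpha,2\alpha\}$ and, while $f(w+\beta p)\le f(w)-\xi$, set $\alpha=\beta$, then return $\alpha$; otherwise return $\alpha=0$. Algorithm DFNDFL: start from $x_0\in X\cap\mathcal{Z}$, $\xi_0>0$, $\theta\in(0,1)$. At iteration $k$, Phase 1 performs a projected line search along a continuous direction producing $\tilde x_k\in X\cap\mathcal{Z}$ with $f(\tilde x_k)\le f(x_k)$. Phase 2.A sets $y^+=\tilde x_k$ and, while the working set $D$ of feasible primitive integer directions (directions $d\in\mathbb{Z}^n$ with $d_i=0$ for $i\in I^c$, $d_z$ having greatest common divisor of components equal to 1, and $\tilde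 x_k+d\in X\cap\mathcal{Z}$) is nonempty and $y^+=\tilde x_k$, picks $d\in D$, removes it, and runs the Discrete Search from $y=y^+$ along $d$ with tentative step $\tilde\alpha_k^{(d)}$ and decrease parameter $\xi_k$; on success $y^+=y+\alpha d$ (so $f(y^+)\le f(\tilde x_k)-\xi_k$), on failure $\tilde\alpha_{k+1}^{(d)}=\max\{1,\lfloor\tilde\alpha_k^{(d)}/2\rfloor\}$. Phase 2.B: if $y^+=\tilde x_k$ and the Discrete Search fails with tentative step $\tilde\alpha_k^{(d)}=1$ for all $d$ in the current direction set $D_k$, set $\xi_{k+1}=\theta\xi_k$ (and possibly enlarge $D_k$ with new feasible primitive directions); otherwise $\xi_{k+1}=\xi_k$. Phase 3 chooses any $x_{k+1}\in X\cap\mathcal{Z}$ with $f(x_{k+1})\le f(y^+)$. *)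

(* Defs.v *)
From HB Require Import structures.
From mathcomp Require Import all_boot all_order all_algebra.
From mathcomp Require Import all_classical all_reals all_analysis.
Set Implicit Arguments.
Unset Strict Implicit.
Unset Printing Implicit Defensive.
Import Order.TTheory GRing.Theory Num.Theory.
Import numFieldNormedType.Exports.
Local Open Scope ring_scope.

Section DFNDFL.
Variables (R : realType) (n : nat) (Iz : {set 'I_n}) (l u : 'I_n -> R).
Variable f : 'rV[R]_n -> R.

Definition inXZ (x : 'rV[R]_n) : Prop :=
  forall i, l i <= x 0 i <= u i /\ (i \in Iz -> x 0 i \is a Num.int).

Definition dirR (d : 'rV[int]_n) : 'rV[R]_n := map_mx (fun z : int => z%:~R) d.

Definition primitive_dir (d : 'rV[int]_n) : Prop :=
  (forall i, i \notin Iz -> d 0 i = 0) /\ \big[gcdz/0%Z]_(i in Iz) d 0 i = 1%Z.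

Definition largest_step (w p : 'rV[R]_n) (abar : R) : Prop :=
  0 <= abar /\ inXZ (w + abar *: p) /\
  forall a, 0 <= a -> inXZ (w + a *: p) -> a <= abar.

(* Discrete Search(atil, w, p, xi; alpha): alpha is the returned step *)
Definition discrete_search (atil : R) (w p : 'rV[R]_n) (xi : R) (alpha : R)
  : Prop :=
  exists abar, largest_step w p abar /\
    let a0 := Num.min abar atil in
    let st (i : nat) := Num.min abar (2 ^+ i * a0) in
    ( (0 < a0 /\ f (w + a0 *: p) <= f w - xi) /\
      exists j : nat, alpha = st j /\
        (forall i, (i <= j)%N -> f (w + st i *: p) <= f w - xi) /\
        (alpha = abar \/ f w - xi < f (w + st j.+1 *: p)) )
    \/
    ( ~ (0 < a0 /\ f (w + a0 *: p) <= f w - xi) /\ alpha = 0 ).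

(* One iteration k of DFNDFL, relating the iterates x_k, x~_k, y+_k, the
   parameters xi_k, the direction sets D_k and the tentative steps atil_k. *)
Definition dfndfl_iter (theta : R)
  (x xt yp : nat -> 'rV[R]_n) (xi : nat -> R)
  (D : nat -> seq 'rV[int]_n) (atil : nat -> 'rV[int]_n -> nat) (k : nat)
  : Prop :=
  (inXZ (xt k) /\ f (xt k) <= f (x k)) /\
  (* Phase 2.A : working set W of feasible directions of D_k, explored in
     some order ord; j failures, then either a success or exhaustion *)
  (let W := undup [seq d <- D k | `[< inXZ (xt k + dirR d) >]] in
   exists ord : seq 'rV[int]_n, perm_eq ord W /\
   exists j : nat, (j <= size ord)%N /\
     (forall i, (i < j)%N ->
        discrete_search (atil k (nth 0 ord i))%:R (xt k)
          (dirR (nth 0 ord i)) (xi k) 0) /\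
     ( ((j < size ord)%N /\ exists alpha, 0 < alpha /\
          discrete_search (atil k (nth 0 ord j))%:R (xt k)
            (dirR (nth 0 ord j)) (xi k) alpha /\
          yp k = xt k + alpha *: dirR (nth 0 ord j))
       \/ (j = size ord /\ yp k = xt k) ) /\
     (forall i, (i < j)%N ->
        atil k.+1 (nth 0 ord i) = maxn 1 (atil k (nth 0 ord i))./2) /\
     (forall d, d \in D k -> d \notin take j.+1 ord ->
        atil k.+1 d = atil k d) /\
   (let fail_all := yp k = xt k /\ (forall d, d \in W -> atil k d = 1%N) in
      (fail_all -> xi k.+1 = theta * xi k /\ {subset D k <= D k.+1} /\
                   (forall d, d \in D k.+1 -> primitive_dir d)) /\
      (~ fail_all -> xi k.+1 = xi k /\ D k.+1 = D k))) /\
  (inXZ (x k.+1) /\ f (x k.+1) <= f (yp k)).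

Definition dfndfl_run (theta : R)
  (x xt yp : nat -> 'rV[R]_n) (xi : nat -> R)
  (D : nat -> seq 'rV[int]_n) (atil : nat -> 'rV[int]_n -> nat) : Prop :=
  inXZ (x 0%N) /\ 0 < xi 0%N /\ 0 < theta < 1 /\
  (forall d, d \in D 0%N -> primitive_dir d) /\
  forall k, dfndfl_iter theta x xt yp xi D atil k.

End DFNDFL.

(* Main.v *)
Require Import Defs.
From HB Require Import structures.
From mathcomp Require Import all_boot all_order all_algebra.
From mathcomp Require Import all_classical all_reals all_analysis.
Import Order.TTheory GRing.Theory Num.Theory.
Import numFieldNormedType.Exports.
Local Open Scope ring_scope.
Local Open Scope classical_set_scope.
From mathcomp Require Import zify lra.

Definition hpot (a : nat) : nat := if a is 0%N then 2%N else a.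

Lemma hpot_le (a : nat) : (hpot (maxn 1 a./2) <= hpot a)%N.
Proof.
case: a => [|[|a]] //=.
have -> : maxn 1 (a.+2)./2 = (a./2).+1 by apply/maxn_idPr.
rewrite /hpot !ltnS leq_half_double -addnn; lia.
Qed.

Lemma hpot_lt (a : nat) : a <> 1%N -> (hpot (maxn 1 a./2) < hpot a)%N.
Proof.
case: a => [|[|a]] //= _.
have -> : maxn 1 (a.+2)./2 = (a./2).+1 by apply/maxn_idPr.
rewrite /hpot !ltnS leq_half_double -addnn; lia.
Qed.

Lemma sum_strict (T : eqType) (s : seq T) (g h : T -> nat) (d0 : T) :
  uniq s -> (forall d, d \in s -> (g d <= h d)%N) -> d0 \in s ->
  (g d0 < h d0)%N -> (\sum_(d <- s) g d < \sum_(d <- s) h d)%N.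
Proof.
move=> us hle hd0 hlt.
rewrite (bigD1_seq d0) //= [X in (_ < X)%N](bigD1_seq d0) //=.
rewrite -addSn leq_add //.
rewrite big_seq_cond [X in (_ <= X)%N]big_seq_cond.
by apply: leq_sum => i /andP[/hle].
Qed.

Theorem mainTheorem8 (R : realType) (n : nat) (Iz : {set 'I_n})
  (l u : 'I_n -> R)
  (hlu : forall i, l i < u i)
  (hint : forall i, i \in Iz -> l i \is a Num.int /\ u i \is a Num.int)
  (f : 'rV[R]_n -> R)
  (hf : continuous f)
  (hLip : exists L : R, forall x y : 'rV[R]_n,
      inXZ Iz l u x -> inXZ Iz l u y ->
      (forall i, i \in Iz -> x 0 i = y 0 i) ->
      `|f x - f y| <= L * `|x - y|)
  (theta : R) (x xt yp : nat -> 'rV[R]_n) (xi : nat -> R)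
  (D : nat -> seq 'rV[int]_n) (atil : nat -> 'rV[int]_n -> nat)
  (hrun : dfndfl_run Iz l u f theta x xt yp xi D atil) :
  xi @ \oo --> 0.
Proof.
case: hrun => hx0 [hxi0 [/andP[th0 th1] [hD0 hit]]].
set FA := fun k => yp k = xt k /\ (forall d, d \in
   undup [seq d <- D k | `[< inXZ Iz l u (xt k + dirR R d) >]] -> atil k d = 1%N).
set Dstep := fun k => (forall d, d \in D k -> (hpot (atil k.+1 d) <= hpot (atil k d))%N)
   /\ exists2 d, d \in D k & (hpot (atil k.+1 d) < hpot (atil k d))%N.
have hxiD k : (FA k -> xi k.+1 = theta * xi k) /\ (~ FA k -> xi k.+1 = xi k /\ D k.+1 = D k).
  case: (hit k) => _ [[ord [_ [j [_ [_ [_ [_ [_ [h1 h2]]]]]]]]] _].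
  by split => [/h1[]|/h2].
have hinx k : inXZ Iz l u (x k) by case: k => [//|k]; case: (hit k) => _ [_ []].
have hstep k : f (x k.+1) <= f (x k) - xi k \/
   (yp k = xt k /\ f (x k.+1) <= f (x k) /\ (~ FA k -> Dstep k)).
  case: (hit k) => [[_ hfxt] [[ord [hperm [j [hj [_ [hbr [hhalf [hsame _]]]]]]]] [_ hfx1]]].
  case: hbr => [[hjs [alpha [ha [hds hyp]]]] | [hjs hyp]].
    left; case: hds => abar [_ /= [[_ [j' [ea [hall _]]]] | [_ ha0]]]; last first.
      by rewrite ha0 ltxx in ha.
    have := hall j' (leqnn _); rewrite -ea -hyp => h1.
    apply: (le_trans hfx1); apply: (le_trans h1); by rewrite lerD2r.
  right; split => //; split; first by apply: (le_trans hfx1); rewrite hyp.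
  move=> hnFA.
  have [d0 [hd0W hd0]] : exists d, d \in undup [seq d <- D k | `[< inXZ Iz l u (xt k + dirR R d) >]]
       /\ atil k d <> 1%N.
    apply: contrapT => hne; apply: hnFA; split => // d hd; apply: contrapT => hne1.
    by apply: hne; exists d.
  have hord d : d \in ord -> atil k.+1 d = maxn 1 (atil k d)./2.
    move=> hd; rewrite -(nth_index 0 hd); apply: hhalf; by rewrite hjs index_mem.
  split.
    move=> d hd; case: (boolP (d \in ord)) => hdo.
      by rewrite hord // hpot_le.
    rewrite hsame //; apply: contra hdo; exact: mem_take.
  exists d0.
    by move: hd0W; rewrite mem_undup mem_filter => /andP[].
  by rewrite hord ?hpot_lt // (perm_mem hperm).
have hxi_pos k : 0 < xi k.
  elim: k => [//|k IH]; case: (pselect (FA k)) => h.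
    by rewrite ((hxiD k).1 h) mulr_gt0.
  by rewrite ((hxiD k).2 h).1.
have hxi_le k : xi k.+1 <= xi k.
  case: (pselect (FA k)) => h; last by rewrite ((hxiD k).2 h).1.
  rewrite ((hxiD k).1 h); have := hxi_pos k; nra.
have hmono k m : xi (k + m)%N <= xi k.
  elim: m => [|m IH]; first by rewrite addn0.
  by rewrite addnS; apply: le_trans (hxi_le _) IH.
have [m0 hm0] : exists m0, forall k, m0 <= f (x k).
  pose A := [set v : 'rV[R]_n | forall i, `[l i, u i]%classic (v ord0 i)].
  have cA : compact A := @rV_compact _ _ (fun i => `[l i, u i]%classic) (fun i => @segment_compact R (l i) (u i)).
  have nA : A !=set0.
    exists (\row_i l i) => i /=; by rewrite mxE in_itv /= lexx ltW.
  have [c _ hc] := EVT_min_rV nA cA (@continuous_subspaceT _ _ A _ hf).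
  exists (f c) => k; apply: hc; rewrite inE => i.
  by case: (hinx k i) => /andP[h1 h2] _; rewrite /= in_itv /= h1 h2.
case: (pselect (forall K, exists k, (K <= k)%N /\ FA k)) => [hinf | hfin].
  have hpow m : exists k, xi k <= theta ^+ m * xi 0%N.
    elim: m => [|m [k hk]]; first by exists 0%N; rewrite expr0 mul1r.
    have [k' [hkk' hFA]] := hinf k; exists k'.+1.
    rewrite ((hxiD k').1 hFA) exprS -mulrA ler_pM2l //.
    have := hmono k (k' - k)%N; rewrite subnKC // => h; exact: le_trans h hk.
  apply/cvgrPdist_le => eps heps.
  have : `|theta| < 1 by rewrite gtr0_norm.
  move=> /cvg_expr /cvgrPdist_lt /(_ (eps / xi 0%N)) [].
    by rewrite divr_gt0.
  move=> N _ HN; have hN := HN N (leqnn N).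
  rewrite /= sub0r normrN ger0_norm ?exprn_ge0 ?ltW // ltr_pdivlMr // in hN.
  have [k hk] := hpow N; exists k => // t /= hkt.
  rewrite sub0r normrN ger0_norm ?ltW //.
  have := hmono k (t - k)%N; rewrite subnKC // => h.
  by apply: (le_lt_trans h); apply: (le_lt_trans hk).
have [K hK] : exists K, forall k, (K <= k)%N -> ~ FA k.
  apply: contrapT => hne; apply: hfin => K; apply: contrapT => hne2.
  by apply: hne; exists K => k hk hFA; apply: hne2; exists k.
have hconst m : xi (K + m)%N = xi K /\ D (K + m)%N = D K.
  elim: m => [|m [e1 e2]]; first by rewrite addn0.
  rewrite addnS; have [-> ->] := (hxiD (K + m)%N).2 (hK _ (leq_addr _ _)).
  by [].
pose c := xi K; have hc : 0 < c := hxi_pos K.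
pose s := undup (D K).
pose Phi := fun k => (\sum_(d <- s) hpot (atil k d))%N.
have hstep2 m : f (x (K + m)%N.+1) <= f (x (K + m)%N) - c \/
   (f (x (K + m)%N.+1) <= f (x (K + m)%N) /\ (Phi (K + m)%N.+1 < Phi (K + m)%N)%N).
  have [e1 e2] := hconst m.
  case: (hstep (K + m)%N) => [h|[_ [h1 h2]]]; first by left; rewrite /c -e1.
  right; split => //.
  have [hle [d hd hlt]] := h2 (hK _ (leq_addr _ _)).
  rewrite e2 in hle hd.
  apply: (@sum_strict _ _ _ _ d); rewrite ?undup_uniq ?mem_undup // => d'.
  rewrite mem_undup; exact: hle.
have Q p : forall m, f (x (K + m)%N) < m0 + p%:R * c -> False.
  elim: p => [|p IHp] m.
    by rewrite mul0r addr0 => h; have := hm0 (K + m)%N; lra.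
  suff: forall q m, (Phi (K + m)%N <= q)%N -> f (x (K + m)%N) < m0 + p.+1%:R * c -> False.
    by move=> /(_ _ m (leqnn _)).
  rewrite -natr1 mulrDl mul1r.
  elim=> [|q IHq] m' hq hf'.
    case: (hstep2 m') => [h|[h1 h2]].
      by apply: (IHp m'.+1); rewrite addnS; lra.
    by move: (leq_trans h2 hq).
  case: (hstep2 m') => [h|[h1 h2]].
    by apply: (IHp m'.+1); rewrite addnS; lra.
  apply: (IHq m'.+1); rewrite addnS; last by lra.
  by rewrite -ltnS; apply: leq_trans h2 hq.
have hb := @archi_boundP R ((f (x K) - m0) / c).
have hb' : (f (x K) - m0) / c < (Num.Def.archi_bound ((f (x K) - m0) / c))%:R.
  by apply: hb; rewrite divr_ge0 ?subr_ge0 ?hm0 ?ltW.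
rewrite ltr_pdivrMr // in hb'.
exfalso; apply: (Q (Num.Def.archi_bound ((f (x K) - m0) / c)) 0%N); rewrite addn0; lra.
Qed.
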